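(* Let $A$ be an R$^*$-algebra and $v\in A$ a partial isometry. If $vv^*\le v^*v$, then $vv^*=v^*v$.
   Context: An R$^*$-algebra is a (not necessarily closed, not necessarily unital) $^*$-subalgebra $A$ of $B(H)$, $H$ a complex Hilbert space, such that every self-adjoint element of $A$ has finite spectrum. For projections, $p\le q$ means $pq=p$. *)

(* Defs.v *)
From mathcomp Require Import all_boot all_algebra complex.
From mathcomp Require Import reals.
Set Implicit Arguments. Unset Strict Implicit. Unset Printing Implicit Defensive.
Import GRing.Theory Num.Theory.
Local Open Scope ring_scope.

Section Hilbert.
Variables (R : realType) (V : lmodType R[i]) (ip : V -> V -> R[i]).

Definition ipnorm (x : V) : R := Num.sqrt (@complex.Re R (ip x x)).

Definition is_inner_product : Prop :=
  [/\ forall y, linear (fun x => ip x y),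
      forall x y, ip y x = (ip x y)^*,
      forall x, 0 <= ip x x &
      forall x, ip x x = 0 -> x = 0].

Definition ip_complete : Prop :=
  forall u : nat -> V,
    (forall e : R, 0 < e -> exists N, forall m n, (N <= m)%N -> (N <= n)%N ->
        ipnorm (u m - u n) < e) ->
    exists x, forall e : R, 0 < e -> exists N, forall n, (N <= n)%N ->
        ipnorm (u n - x) < e.

Definition is_hilbert : Prop := is_inner_product /\ ip_complete.

Definition bounded_op (T : V -> V) : Prop :=
  linear T /\ exists M : R, forall x, ipnorm (T x) <= M * ipnorm x.

Definition is_adjoint (T S : V -> V) : Prop :=
  bounded_op S /\ forall x y, ip (T x) y = ip x (S y).

Definition in_spectrum (T : V -> V) (l : R[i]) : Prop :=
  ~ exists S : V -> V, bounded_op S /\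
      (forall x, S (T x - l *: x) = x) /\ (forall x, T (S x) - l *: S x = x).

Definition finite_spectrum (T : V -> V) : Prop :=
  exists s : seq R[i], forall l, in_spectrum T l -> l \in s.

Definition self_adjoint (T : V -> V) : Prop := bounded_op T /\ is_adjoint T T.

(* A is a (not necessarily closed, not necessarily unital) *-subalgebra of B(H) *)
Definition is_star_subalgebra (A : (V -> V) -> Prop) : Prop :=
  (forall T, A T -> bounded_op T) /\
  [/\ A (fun _ => 0),
      forall S T, A S -> A T -> A (fun x => S x + T x),
      forall (c : R[i]) T, A T -> A (fun x => c *: T x),
      forall S T, A S -> A T -> A (S \o T) &
      forall T, A T -> exists S, A S /\ is_adjoint T S].

Definition is_Rstar_algebra (A : (V -> V) -> Prop) : Prop :=
  is_star_subalgebra A /\ forall T, A T -> self_adjoint T -> finite_spectrum T.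

Definition is_projection (p : V -> V) : Prop := self_adjoint p /\ p \o p = p.
Definition proj_le (p q : V -> V) : Prop := p \o q = p.

Definition partial_isometry (v vs : V -> V) : Prop :=
  is_adjoint v vs /\ is_projection (vs \o v).

End Hilbert.

(* Main.v *)
Require Import Defs.
From mathcomp Require Import all_boot all_algebra complex.
From mathcomp Require Import reals ring lra.
From Stdlib Require Import FunctionalExtensionality.
Import GRing.Theory Num.Theory.
Local Open Scope ring_scope.
Set Implicit Arguments. Unset Strict Implicit.
Local Open Scope complex_scope.
Local Open Scope ring_scope.

Section Lin.
Variables (R : realType) (V W : lmodType R[i]).
Lemma linD (f : V -> W) : linear f -> forall x y, f (x + y) = f x + f y.
Proof. by move=> lf x y; have := lf 1 x y; rewrite /= !scale1r. Qed.
Lemma lin0 (f : V -> W) : linear f -> f 0 = 0.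
Proof. move=> lf; have := (linD lf 0 0); rewrite addr0 => /eqP. by rewrite -subr_eq subrr eq_sym => /eqP. Qed.
Lemma linZ (f : V -> W) : linear f -> forall a x, f (a *: x) = a *: f x.
Proof. by move=> lf a x; have := lf a x 0; rewrite /= !addr0 lin0 // addr0. Qed.
Lemma linN (f : V -> W) : linear f -> forall x, f (- x) = - f x.
Proof. by move=> lf x; rewrite -scaleN1r linZ // scaleN1r. Qed.
Lemma linB (f : V -> W) : linear f -> forall x y, f (x - y) = f x - f y.
Proof. by move=> lf x y; rewrite linD // linN. Qed.
End Lin.

Section IP.
Variables (R : realType) (V : lmodType R[i]) (ip : V -> V -> R[i]).
Hypothesis hI : is_inner_product ip.
Let lin y : linear (ip^~ y). Proof. by case: hI. Qed.
Lemma ipC x y : ip y x = (ip x y)^*. Proof. by case: hI. Qed.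
Lemma ipDl x y z : ip (x + y) z = ip x z + ip y z.
Proof. exact: (linD (lin z)). Qed.
Lemma ipZl a x z : ip (a *: x) z = a * ip x z.
Proof. exact: (linZ (lin z)). Qed.
Lemma ip0l z : ip 0 z = 0.
Proof. exact: (lin0 (lin z)). Qed.
Lemma ipBl x y z : ip (x - y) z = ip x z - ip y z.
Proof. exact: (linB (lin z)). Qed.
Lemma ipDr x y z : ip z (x + y) = ip z x + ip z y.
Proof. by rewrite ipC ipDl rmorphD [ip z x]ipC [ip z y]ipC. Qed.
Lemma ipZr a x z : ip z (a *: x) = a^* * ip z x.
Proof. by rewrite ipC ipZl rmorphM [ip z x]ipC. Qed.
Lemma ip0r z : ip z 0 = 0.
Proof. by rewrite ipC ip0l conjC0. Qed.
Lemma ipBr x y z : ip z (x - y) = ip z x - ip z y.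
Proof. by rewrite ipC ipBl rmorphB [ip z x]ipC [ip z y]ipC. Qed.
Lemma ip_eq0 x : ip x x = 0 -> x = 0. Proof. by case: hI => _ _ _; apply. Qed.
Lemma ip_ge0 x : 0 <= ip x x. Proof. by case: hI => _ _ + _; apply. Qed.
Lemma ip_extl a b : (forall z, ip a z = ip b z) -> a = b.
Proof. move=> h; apply/eqP; rewrite -subr_eq0; apply/eqP/ip_eq0. by rewrite ipBl h subrr. Qed.
Lemma ip_extr a b : (forall z, ip z a = ip z b) -> a = b.
Proof. move=> h; apply: ip_extl => z. by rewrite ipC h [ip b z]ipC. Qed.
End IP.

Lemma conjR (R : realType) (r : R) : (r%:C)^* = r%:C :> R[i].
Proof. apply: conj_Creal. by rewrite complex_real. Qed.
Lemma ReMR (R : realType) (r : R) (z : R[i]) : complex.Re (r%:C * z) = r * complex.Re z.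
Proof. case: z => a b /=. by rewrite mul0r subr0. Qed.
Lemma sqrt_sq (R : realType) (X Y M : R) : 0 <= X -> 0 <= Y ->
  Num.sqrt X <= M * Num.sqrt Y -> X <= M ^+ 2 * Y.
Proof.
move=> hX hY h.
have h0 := sqrtr_ge0 X.
have := ler_pM h0 h0 h h.
by rewrite -expr2 sqr_sqrtr // mulrACA -!expr2 sqr_sqrtr.
Qed.
Lemma bnd (R : realType) (x : R) : exists N : nat, x < N%:R.
Proof. case: (lerP 0 x) => hx; last by exists 0%N. exists (Num.bound x); exact: archi_boundP. Qed.
Section RC.
Variable R : realType.
Lemma RCN (x : R) : (- x)%:C = - x%:C. Proof. by simpc. Qed.
Lemma RCD (x y : R) : (x + y)%:C = x%:C + y%:C. Proof. by simpc. Qed.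
Lemma RCB (x y : R) : (x - y)%:C = x%:C - y%:C. Proof. by simpc. Qed.
Lemma RCM (x y : R) : (x * y)%:C = x%:C * y%:C. Proof. by simpc. Qed.
Lemma RC1 : (1 : R)%:C = 1. Proof. by []. Qed.
Lemma RCX (x : R) : (x ^+ 2)%:C = x%:C ^+ 2. Proof. by rewrite !expr2 RCM. Qed.
End RC.
Section Op.
Variables (R : realType) (V : lmodType R[i]) (ip : V -> V -> R[i]).
Hypothesis hI : is_inner_product ip.
Variables (v vs : V -> V).
Hypotheses (lv : linear v) (lvs : linear vs)
  (adj : forall x y, ip (v x) y = ip x (vs y))
  (padj : forall x y, ip (vs (v x)) y = ip x (vs (v y)))
  (pp : forall x, vs (v (vs (v x))) = vs (v x))
  (hle : forall x, v (vs (vs (v x))) = v (vs x)).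

Lemma vp x : v (vs (v x)) = v x.
Proof.
have h : v (x - vs (v x)) = 0.
  apply: (ip_eq0 hI); rewrite adj.
  by rewrite (linB lv) (linB lvs) pp subrr (ip0r hI).
by apply/eqP; rewrite eq_sym -subr_eq0 -(linB lv) h.
Qed.

Lemma qadj x z : ip (v (vs x)) z = ip x (v (vs z)).
Proof. by rewrite adj [ip x _](ipC hI) adj [ip (vs x) _](ipC hI). Qed.

Lemma pq x : vs (v (v (vs x))) = v (vs x).
Proof. apply: (ip_extl hI) => z. by rewrite padj qadj hle -qadj. Qed.

Lemma pv x : vs (v (v x)) = v x.
Proof. by have := pq (v x); rewrite vp. Qed.

Lemma qq x : v (vs (v (vs x))) = v (vs x).
Proof. by rewrite vp. Qed.
End Op.
Section Seq.
Variable (R : realType).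
Fixpoint ab (l : R) n : R * R :=
  if n is n'.+1 then let: (x, y) := ab l n' in (y, l * y - x) else (1, l).
Definition aa l n := (ab l n).1.
Lemma aa0 l : aa l 0 = 1. Proof. by []. Qed.
Lemma aa1 l : aa l 1 = l. Proof. by []. Qed.
Lemma aaSS l n : aa l n.+2 = l * aa l n.+1 - aa l n.
Proof. by rewrite /aa /=; case: (ab l n). Qed.
Fixpoint sq l n : R := if n is n'.+1 then sq l n' + aa l n ^+ 2 else aa l 0 ^+ 2.

Lemma aa_inv l n : aa l n.+1 ^+ 2 - l * aa l n.+1 * aa l n + aa l n ^+ 2 = 1.
Proof.
elim: n => [|n IH]; first by rewrite aa1 aa0; ring.
by rewrite aaSS -IH; ring.
Qed.
End Seq.
Section Bounds.
Variable (R : realType).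
Variable (l : R).
Hypotheses (l0 : 0 <= l) (l1 : l <= 1).
Lemma aa_up n : aa l n.+1 ^+ 2 + aa l n ^+ 2 <= 2.
Proof.
have := aa_inv l n; set x := aa l n.+1; set y := aa l n => h.
have h1 : 0 <= l * (x - y) ^+ 2 by apply: mulr_ge0 => //; apply: sqr_ge0.
have h2 : 0 <= (1 - l) * (x ^+ 2 + y ^+ 2).
  by apply: mulr_ge0; [rewrite subr_ge0 | apply: addr_ge0; apply: sqr_ge0].
have e1 : l * (x - y) ^+ 2 = l * x^+2 - 2 * (l * x * y) + l * y^+2 by ring.
have e2 : (1 - l) * (x ^+ 2 + y ^+ 2) = x^+2 + y^+2 - l * x^+2 - l * y^+2 by ring.
rewrite e1 in h1; rewrite e2 in h2; lra.
Qed.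
Lemma aa_lo n : 2 <= 3 * (aa l n.+1 ^+ 2 + aa l n ^+ 2).
Proof.
have := aa_inv l n; set x := aa l n.+1; set y := aa l n => h.
have h1 : 0 <= l * (x + y) ^+ 2 by apply: mulr_ge0 => //; apply: sqr_ge0.
have h2 : 0 <= (1 - l) * (x ^+ 2 + y ^+ 2).
  by apply: mulr_ge0; [rewrite subr_ge0 | apply: addr_ge0; apply: sqr_ge0].
have e1 : l * (x + y) ^+ 2 = l * x^+2 + 2 * (l * x * y) + l * y^+2 by ring.
have e2 : (1 - l) * (x ^+ 2 + y ^+ 2) = x^+2 + y^+2 - l * x^+2 - l * y^+2 by ring.
rewrite e1 in h1; rewrite e2 in h2; lra.
Qed.
Lemma sq_lo n : n%:R <= 3 * sq l n.
Proof.
suff : n%:R <= 3 * sq l n /\ n.+1%:R <= 3 * sq l n.+1 by case.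
elim: n => [|n [IH1 IH2]].
  split; first by rewrite /= mulr_ge0 // sqr_ge0.
  have := aa_lo 0; rewrite /= => ?; lra.
split => //.
have := aa_lo n.+1; rewrite /= -!/(sq l _) in IH1 IH2 *.
rewrite !mulrSr in IH1 IH2 * => ?. lra.
Qed.
End Bounds.
Section Shift.
Variables (R : realType) (V : lmodType R[i]) (ip : V -> V -> R[i]).
Hypothesis hI : is_inner_product ip.
Variables (v vs : V -> V).
Hypotheses (lv : linear v) (lvs : linear vs)
  (adj : forall x y, ip (v x) y = ip x (vs y))
  (padj : forall x y, ip (vs (v x)) y = ip x (vs (v y)))
  (pp : forall x, vs (v (vs (v x))) = vs (v x))
  (hle : forall x, v (vs (vs (v x))) = v (vs x)).
Variable xi : V.
Hypotheses (vsxi : vs xi = 0) (pxi : vs (v xi) = xi).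

Definition w k := iter k v xi.
Lemma vw k : v (w k) = w k.+1. Proof. by []. Qed.
Lemma pw k : vs (v (w k)) = w k.
Proof. case: k => [|k] //. by rewrite /w iterS (pv hI lv lvs adj padj pp hle). Qed.
Lemma vsw0 : vs (w 0) = 0. Proof. by []. Qed.
Lemma vswS k : vs (w k.+1) = w k. Proof. by rewrite -vw pw. Qed.

Lemma orth j k : ip (w j) (w k) = if j == k then ip xi xi else 0.
Proof.
elim: j k => [|j IH] [|k].
- by [].
- by rewrite -vw (ipC hI) adj vsw0 (ip0r hI) conjC0.
- by rewrite -vw adj vsw0 (ip0r hI).
- by rewrite -!vw adj pw IH.
Qed.

Lemma zid (A B C D : V) : -A + B + (C + A - D) = B - D + C.
Proof. by rewrite [C + A]addrC -!addrA [B + (A + _)]addrCA addKr [C - D]addrC. Qed.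

Variable l : R.
Definition T x := v x + vs x.
Lemma TD x z : T (x + z) = T x + T z.
Proof. by rewrite /T (linD lv) (linD lvs) addrACA. Qed.
Lemma TZ a x : T (a *: x) = a *: T x.
Proof. by rewrite /T (linZ lv) (linZ lvs) scalerDr. Qed.
Lemma Tw0 : T (w 0) = w 1.
Proof. by rewrite /T vsw0 addr0. Qed.
Lemma TwS k : T (w k.+1) = w k.+2 + w k.
Proof. by rewrite /T vswS. Qed.

Fixpoint y N := if N is N'.+1 then y N' + (aa l N)%:C *: w N else (aa l 0)%:C *: w 0.

Lemma y0 : y 0 = (aa l 0)%:C *: w 0. Proof. by []. Qed.
Lemma yS N : y N.+1 = y N + (aa l N.+1)%:C *: w N.+1. Proof. by []. Qed.

Lemma TE N : T (y N) - l%:C *: y N = (- aa l N.+1)%:C *: w N + (aa l N)%:C *: w N.+1.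
Proof.
elim: N => [|N IH].
  rewrite /= TZ Tw0 aa0 aa1 RC1 scale1r RCN scaleNr.
  by rewrite addrC.
rewrite yS TD TZ TwS !scalerDr opprD addrACA IH aaSS.
rewrite !RCN RCB RCM !scaleNr scalerBl opprB -scalerA.
exact: zid.
Qed.

Lemma yw N j : (N < j)%N -> ip (y N) (w j) = 0.
Proof.
elim: N => [|N IH] hj.
  by rewrite y0 (ipZl hI) orth; case: eqP hj => [<-|]; rewrite ?mulr0.
rewrite yS (ipDl hI) IH; last exact: ltnW.
rewrite (ipZl hI) orth; case: eqP hj => [<-|]; first by rewrite ltnn.
by rewrite mulr0 addr0.
Qed.
Lemma wy N j : (N < j)%N -> ip (w j) (y N) = 0.
Proof. by move=> h; rewrite (ipC hI) yw // conjC0. Qed.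

Lemma ny N : ip (y N) (y N) = (sq l N)%:C * ip xi xi.
Proof.
elim: N => [|N IH].
  rewrite y0 (ipZl hI) (ipZr hI) orth eqxx aa0 RC1 conjC1 !mul1r.
  have -> : sq l 0 = 1 by rewrite /= aa0 expr1n.
  by rewrite RC1 mul1r.
rewrite yS !(ipDl hI) !(ipDr hI) IH !(ipZl hI) !(ipZr hI) yw // wy // orth eqxx conjR.
by rewrite !mulr0 !addr0 add0r /= RCD mulrDl RCX expr2 mulrA.
Qed.

Lemma nz (al be : R) N :
  ip (al%:C *: w N + be%:C *: w N.+1) (al%:C *: w N + be%:C *: w N.+1)
  = (al ^+ 2 + be ^+ 2)%:C * ip xi xi.
Proof.
rewrite !(ipDl hI) !(ipDr hI) !(ipZl hI) !(ipZr hI) !orth !conjR eqxx.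
rewrite (ltn_eqF (ltnSn N)) (gtn_eqF (ltnSn N)).
by rewrite !mulr0 addr0 add0r eqxx RCD mulrDl !RCX !expr2 !mulrA.
Qed.

Lemma spec : 0 <= l -> l <= 1 -> xi != 0 -> in_spectrum ip T l%:C.
Proof.
move=> hl0 hl1 hxi [S [[_ [M hM]] [h1 _]]].
have hc := ip_ge0 hI xi.
have hIm := ger0_Im hc.
have cE : ip xi xi = (complex.Re (ip xi xi))%:C.
  by move: hIm; case: (ip xi xi) => a b /= ->.
have hr : 0 < complex.Re (ip xi xi).
  rewrite lt0r; apply/andP; split.
    apply/eqP => h0; move/negP: hxi; apply; apply/eqP; apply: (ip_eq0 hI).
    by rewrite cE h0.
  by move: hc; rewrite lecE => /andP[].
set r := complex.Re (ip xi xi) in hr cE.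
have [N hN] := bnd (6 * M ^+ 2).
have e := h1 (y N).
have := hM (T (y N) - l%:C *: y N); rewrite e TE /ipnorm ny nz !ReMR -/r.
have hsq := sq_lo hl0 hl1 N.
have hup := aa_up hl0 hl1 N.
move/sqrt_sq; rewrite sqrrN.
have hM2 := sqr_ge0 M.
set q := aa l N.+1 ^+ 2 + aa l N ^+ 2 in hup *.
have hq : 0 <= q by rewrite /q addr_ge0 // sqr_ge0.
move=> /(_ _ _) H.
have {H} H : sq l N * r <= M ^+ 2 * (q * r).
  apply: H; apply: mulr_ge0; lra.
rewrite mulrA ler_pM2r // in H.
have : M ^+ 2 * q <= M ^+ 2 * 2 by apply: ler_wpM2l.
lra.
Qed.
End Shift.
Lemma pick (R : realType) (s : seq R[i]) :
  exists l : R, [/\ 0 <= l, l <= 1 & l%:C \notin s].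
Proof.
set f := fun k : nat => ((k.+1)%:R^-1 : R)%:C.
have finj : injective f.
  move=> a b /complexI /invr_inj /eqP; rewrite eqr_nat => /eqP; by case.
case: (boolP (all (fun k => f k \in s) (iota 0 (size s).+1))) => [hall|].
  have : (size (map f (iota 0 (size s).+1)) <= size s)%N.
    apply: uniq_leq_size; first by rewrite (map_inj_uniq finj) iota_uniq.
    by move=> z /mapP [k hk ->]; move/allP: hall; apply.
  by rewrite size_map size_iota ltnn.
case/allPn => k _ hk; exists ((k.+1)%:R^-1); split => //.
  by rewrite invr_ge0 ler0n.
by rewrite invf_le1 // ?ltr0Sn // ler1n.
Qed.
Unset Implicit Arguments.

Theorem proposition6p1 (R : realType) (V : lmodType R[i]) (ip : V -> V -> R[i])
  (hH : is_hilbert ip) (A : (V -> V) -> Prop) (hA : is_Rstar_algebra ip A)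
  (v vs : V -> V) (hv : A v) (hpi : partial_isometry ip v vs)
  (hle : proj_le (v \o vs) (vs \o v)) :
  v \o vs = vs \o v.
Proof.
case: hH => hI _.
case: hA => [[hbd [_ hadd _ _ hadjA]] hfin].
case: hpi => [[hbvs adj] [[_ [_ padj]] hpp]].
have lv : linear v := (hbd v hv).1.
have lvs : linear vs := hbvs.1.
have pp : forall x, vs (v (vs (v x))) = vs (v x).
  by move=> x; exact: (congr1 (fun f => f x) hpp).
have hle' : forall x, v (vs (vs (v x))) = v (vs x).
  by move=> x; exact: (congr1 (fun f => f x) hle).
apply: functional_extensionality => y /=.
case: (eqVneq (v (vs y)) (vs (v y))) => // hne; exfalso.
set xi := vs (v y) - v (vs y).
have hxi : xi != 0 by rewrite subr_eq0 eq_sym.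
have vsxi : vs xi = 0.
  apply: (ip_eq0 hI); rewrite -adj.
  by rewrite /xi (linB lvs) (linB lv) hle' (qq hI lv lvs adj pp) subrr (ip0l hI).
have pxi : vs (v xi) = xi.
  by rewrite /xi (linB lv) (linB lvs) pp (pq hI adj padj hle').
have [S [hS [_ hSadj]]] := hadjA v hv.
have eS : S = vs.
  apply: functional_extensionality => x.
  by apply: (ip_extr hI) => z; rewrite -hSadj adj.
rewrite eS in hS.
have hT := hadd _ _ hv hS.
have hsa : self_adjoint ip (fun x => v x + vs x).
  split; first exact: hbd.
  split; first exact: hbd.
  move=> x z; rewrite (ipDl hI) (ipDr hI) [ip (vs x) z](ipC hI) [ip x (v z)](ipC hI).
  by rewrite adj [ip (v z) x]adj addrC.
have [s hs] := hfin _ hT hsa.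
have [l [hl0 hl1 hls]] := pick s.
move/negP: hls; apply; apply: hs.
exact: (spec hI lv lvs adj padj pp hle' vsxi pxi hl0 hl1 hxi).
Qed.
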